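(* Fix a finite relational schema $\sigma$ and an integer $d\geq 2$. Let $\epsilon\in(0,1]$, $r\in\mathbb{N}$, and let $\mathcal{D}$ be a $\sigma$-database belonging to a class $\mathbf{C}$ of $\sigma$-databases of degree at most $d$ such that $\operatorname{h}_r(\mathbf{C})$ is semilinear, written as $\operatorname{h}_r(\mathbf{C})=M_1\cup\dots\cup M_m$ with $m\in\mathbb{N}$ and, for each $i\in[m]$, $M_i=\{\bar v_0^i+a_1\bar v_1^i+\dots+a_{k_i}\bar v_{k_i}^i\mid a_1,\dots,a_{k_i}\in\mathbb{N}\}$ where $\bar v_0^i,\dots,\bar v_{k_i}^i\in\mathbb{N}^{\operatorname{c}(r)}$. Let $c:=\operatorname{c}(r)$, $k:=\max_{i\in[m]}k_i+1$ and $v:=\max_{i\in[m]}\max_{0\leq j\leq k_i}\|\bar v_j^i\|_1$. Then there exists a $\sigma$-database $\mathcal{D}_0$ such that $\|\operatorname{dv}_r(\mathcal{D})-\operatorname{dv}_r(\mathcal{D}_0)\|_1\leq\epsilon$ and $|D_0|\leq kv\left(\frac{3ckv}{\epsilon}+2\right)$.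
   Context: A schema $\sigma$ is a finite set of relation names with arities in $\mathbb{N}_{\geq 1}$. A $\sigma$-database $\mathcal{D}$ has a finite domain $D$ and a relation $R^{\mathcal{D}}\subseteq D^{\operatorname{ar}(R)}$ for each $R\in\sigma$. The Gaifman graph has vertex set $D$ and an edge between distinct $a,b$ whenever some tuple contains both. The degree of an element is the number of tuples containing it; the degree of $\mathcal{D}$ is the maximum. $N_r(a)$ is the set of elements at Gaifman distance at most $r$ from $a$; the $r$-neighbourhood of $a$ is $(\mathcal{D}[N_r(a)],a)$ (induced sub-database with centre $a$); an $r$-type is a centre-preserving isomorphism class of $r$-neighbourhoods; $\operatorname{c}(r)$ is the number of $r$-types of degree at most $d$ over $\sigma$. $\operatorname{h}_r(\mathcal{D})\in\mathbb{N}^{\operatorname{c}(r)}$ counts the elements of each $r$-type; $\operatorname{dv}_r(\mathcal{D})=\operatorname{h}_r(\mathcal{D})/|D|$; $\operatorname{h}_r(\mathbf{C})=\{\operatorname{h}_r(\mathcal{D})\mid\mathcal{D}\in\mathbf{C}\}$. A set is semilinear if it is a finite union of linear sets $\{\bar v_0+\sum a_j\bar v_j\mid a_j\in\mathbb{N}\}$. *)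

(* Defs.v *)
From HB Require Import structures.
From mathcomp Require Import all_boot all_order all_algebra.
From mathcomp Require Import boolp reals.
Set Implicit Arguments. Unset Strict Implicit. Unset Printing Implicit Defensive.
Import Order.TTheory GRing.Theory Num.Theory.

Section Databases.
Variables (S : finType) (ar : S -> nat).

Definition tup (T : Type) := {s : S & (ar s).-tuple T}.

Definition tmap (T1 T2 : Type) (f : T1 -> T2) (t : tup T1) : tup T2 :=
  existT _ (projT1 t) (map_tuple f (projT2 t)).

Record database := Database {
  dom : finType;
  rel : {set {s : S & (ar s).-tuple dom}} }.

Arguments dom : clear implicits.
Definition deg (D : database) (a : dom D) : nat :=
  #|[set t in rel D | a \in (projT2 t : seq _)]|.

Definition deg_le (D : database) (d : nat) : bool := [forall a, @deg D a <= d].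

Definition gadj (D : database) (a b : dom D) : bool :=
  (a != b) && [exists t in rel D, (a \in (projT2 t : seq _)) && (b \in (projT2 t : seq _))].

Fixpoint ball (D : database) (n : nat) (a : dom D) : {set dom D} :=
  match n with
  | 0 => [set a]
  | n'.+1 => ball n' a :|: [set y | [exists x in ball n' a, @gadj D x y]]
  end.

Lemma ball_center (D : database) (n : nat) (a : dom D) : a \in ball n a.
Proof. elim: n => [|n IH] /=; first by rewrite in_set1. by rewrite in_setU IH. Qed.

Definition induced (D : database) (X : {set dom D}) : database :=
  @Database {x : dom D | x \in X} [set t | tmap val t \in rel D].

Record pdb := Pdb { pd : database; center : dom (pd) }.

Definition nbhd (D : database) (r : nat) (a : dom D) : pdb :=
  @Pdb (induced (ball r a)) (exist _ a (ball_center r a)).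

Definition piso (P1 P2 : pdb) : bool :=
  [exists f : {ffun dom (pd P1) -> dom (pd P2)},
    [&& injectiveb f, #|dom (pd P1)| == #|dom (pd P2)|,
        f (center P1) == center P2 &
        [forall t, (t \in rel (pd P1)) == (tmap f t \in rel (pd P2))]]].

(* Representatives of r-types: pointed databases on 'I_n, n <= Nmax.
   Nmax = (d * maxar + 1)^r bounds the size of any r-neighbourhood of degree <= d. *)
Definition maxar : nat := \max_(s : S) ar s.
Definition Nmax (d r : nat) : nat := (d * maxar + 1) ^ r.

Definition Rep (d r : nat) : finType :=
  {n : 'I_(Nmax d r).+1 & ({set tup 'I_n} * 'I_n)%type}.

Definition pdb_of (d r : nat) (p : Rep d r) : pdb :=
  @Pdb (@Database 'I_(projT1 p) (projT2 p).1) (projT2 p).2.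

Definition is_type_rep (d r : nat) (p : Rep d r) : Prop :=
  deg_le (pd (pdb_of p)) d /\
  exists (D : database) (a : dom D), piso (nbhd r a) (pdb_of p).

Definition rtypes (d r : nat) : {set {set Rep d r}} :=
  [set X | `[< exists p : Rep d r, is_type_rep p /\
                 X = [set q | piso (pdb_of q) (pdb_of p)] >]].

Definition rtype (d r : nat) : finType := {X : {set Rep d r} | X \in rtypes d r}.

Definition ctypes (d r : nat) : nat := #|rtype d r|.

Definition hvec (d r : nat) (D : database) : {ffun rtype d r -> nat} :=
  [ffun X : rtype d r => #|[set a : dom D | [exists p in (val X : {set Rep d r}), piso (nbhd r a) (@pdb_of d r p)]]|].

Definition dvec (R : realType) (d r : nat) (D : database) (X : rtype d r) : R :=
  ((hvec d r D X)%:R / #|dom D|%:R)%R.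

Definition norm1 (d r : nat) (w : {ffun rtype d r -> nat}) : nat := \sum_X w X.

End Databases.

(* Main.v *)
Require Import Defs.
From Stdlib Require Eqdep_dec.
From HB Require Import structures.
From mathcomp Require Import all_boot all_order all_algebra.
From mathcomp Require Import boolp reals.
From mathcomp Require Import ring lra zify.
Import Order.TTheory GRing.Theory Num.Theory.
Set Implicit Arguments. Unset Strict Implicit. Unset Printing Implicit Defensive.

Lemma tmap_comp (S : finType) (ar : S -> nat) (A B C : Type) (f : A -> B) (g : B -> C) (t : tup ar A) :
  tmap g (tmap f t) = tmap (fun x => g (f x)) t.
Proof.
case: t => s u; rewrite /tmap /=; congr existT; apply: val_inj => /=.
by rewrite -map_comp.
Qed.

Lemma tmap_id (S : finType) (ar : S -> nat) (A : Type) (f : A -> A) (t : tup ar A) :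
  (forall x, f x = x) -> tmap f t = t.
Proof.
move=> fid; case: t => s u; rewrite /tmap /=; congr existT; apply: val_inj => /=.
by rewrite (eq_map fid) map_id.
Qed.

Lemma tmap_ext (S : finType) (ar : S -> nat) (A B : Type) (f g : A -> B) (t : tup ar A) :
  (forall x, f x = g x) -> tmap f t = tmap g t.
Proof.
move=> fg; case: t => s u; rewrite /tmap /=; congr existT; apply: val_inj => /=.
by rewrite (eq_map fg).
Qed.

Lemma tmap_inj (S : finType) (ar : S -> nat) (A B : eqType) (f : A -> B) :
  injective f -> injective (@tmap S ar A B f).
Proof.
move=> finj [s1 u1] [s2 u2]; rewrite /tmap /= => H.
have E : s1 = s2 by move: (congr1 (@projT1 _ _) H).
subst s2.
have := Stdlib.Logic.Eqdep_dec.inj_pair2_eq_dec _ (fun x y => eq_comparable x y) _ _ _ _ H.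
move/(congr1 val) => /= /(inj_map finj) Hu.
by congr existT; apply: val_inj.
Qed.

Lemma piso_refl (S : finType) (ar : S -> nat) (P : pdb ar) : piso P P.
Proof.
apply/existsP; exists [ffun x => x].
apply/and4P; split.
- by apply/injectiveP => x y; rewrite !ffunE.
- by [].
- by rewrite ffunE.
- apply/forallP => t; rewrite (@tmap_id _ _ _ _ t) //; by move=> x; rewrite ffunE.
Qed.

Lemma piso_trans (S : finType) (ar : S -> nat) (P1 P2 P3 : pdb ar) :
  piso P1 P2 -> piso P2 P3 -> piso P1 P3.
Proof.
move=> /existsP [f /and4P [/injectiveP fi /eqP c1 /eqP fc /forallP fr]].
move=> /existsP [g /and4P [/injectiveP gi /eqP c2 /eqP gc /forallP gr]].
apply/existsP; exists [ffun x => g (f x)].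
apply/and4P; split.
- by apply/injectiveP => x y; rewrite !ffunE => /gi /fi.
- by rewrite c1 c2.
- by rewrite ffunE fc gc.
- apply/forallP => t; rewrite (eqP (fr t)) (eqP (gr _)) !tmap_comp.
  by rewrite (@tmap_ext _ _ _ _ _ [ffun x => g (f x)]) // => x; rewrite ffunE.
Qed.

Lemma piso_sym (S : finType) (ar : S -> nat) (P1 P2 : pdb ar) :
  piso P1 P2 -> piso P2 P1.
Proof.
move=> /existsP [f /and4P [/injectiveP fi /eqP c1 /eqP fc /forallP fr]].
have [g fg gf] : bijective f by apply: inj_card_bij fi _; rewrite c1.
apply/existsP; exists [ffun y => g y].
apply/and4P; split.
- by apply/injectiveP => x y; rewrite !ffunE => /(congr1 f); rewrite !gf.
- by rewrite c1.
- by rewrite ffunE -fc fg.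
- apply/forallP => t.
  rewrite (@tmap_ext _ _ _ _ _ g); last by move=> x; rewrite ffunE.
  rewrite (eqP (fr _)) tmap_comp (@tmap_id _ _ _ _ t) //.
Qed.

Lemma card_bigcup_leq (I T : finType) (P : pred I) (F : I -> {set T}) :
  #|\bigcup_(i | P i) F i| <= \sum_(i | P i) #|F i|.
Proof.
elim/big_rec2: _ => [|i x y _ IH]; first by rewrite cards0.
by apply: leq_trans (leq_card_setU _ _) _; rewrite leq_add2l.
Qed.

Lemma nbr_card (S : finType) (ar : S -> nat) (D : database ar) (d : nat) (x : dom D) :
  deg_le D d -> #|[set y | gadj x y]| <= d * maxar ar.
Proof.
move=> /forallP /(_ x) Hx.
set Tx := [set t in Defs.rel D | x \in (projT2 t : seq _)].
have sub : [set y | gadj x y] \subset \bigcup_(t in Tx) [set y | y \in (projT2 t : seq _)].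
  apply/subsetP => y; rewrite inE => /andP [_ /existsP [t /and3P [tD xt yt]]].
  by apply/bigcupP; exists t; rewrite ?inE ?tD ?xt ?yt.
apply: leq_trans (subset_leq_card sub) _.
apply: leq_trans (card_bigcup_leq _ _) _.
apply: (@leq_trans (\sum_(t in Tx) maxar ar)).
  apply: leq_sum => t _.
  rewrite cardsE; apply: leq_trans (card_size _) _.
  rewrite size_tuple /maxar; exact: leq_bigmax.
rewrite sum_nat_const; apply: leq_mul => //; exact: Hx.
Qed.

Lemma ball_card (S : finType) (ar : S -> nat) (D : database ar) (d : nat) (r : nat) (a : dom D) :
  deg_le D d -> #|ball r a| <= Nmax ar d r.
Proof.
move=> Hd; rewrite /Nmax; elim: r => [|n IH] /=; first by rewrite cards1.
have sub : [set y | [exists x in ball n a, gadj x y]] \subset \bigcup_(x in ball n a) [set y | gadj x y].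
  apply/subsetP => y; rewrite inE => /existsP [x /andP [xb gxy]].
  by apply/bigcupP; exists x => //; rewrite inE.
apply: leq_trans (leq_card_setU _ _) _.
apply: (@leq_trans (#|ball n a| + #|ball n a| * (d * maxar ar))).
  rewrite leq_add2l; apply: leq_trans (subset_leq_card sub) _.
  apply: leq_trans (card_bigcup_leq _ _) _.
  rewrite -sum_nat_const; apply: leq_sum => x _; exact: nbr_card.
rewrite -{1}(muln1 #|ball n a|) -mulnDr expnS mulnC addnC.
by apply: leq_mul.
Qed.

Definition rep_of (S : finType) (ar : S -> nat) (d r : nat) (D : database ar) (a : dom D)
  (Hn : #|dom (pd (nbhd r a))| < (Nmax ar d r).+1) : Rep ar d r :=
  existT (fun n : 'I_(Nmax ar d r).+1 => ({set tup ar 'I_n} * 'I_n)%type) (Ordinal Hn)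
    ([set t | tmap enum_val t \in Defs.rel (pd (nbhd r a))], enum_rank (center (nbhd r a))).

Lemma rep_of_piso (S : finType) (ar : S -> nat) (d r : nat) (D : database ar) (a : dom D) Hn :
  piso (nbhd r a) (pdb_of (@rep_of S ar d r D a Hn)).
Proof.
apply/existsP; exists [ffun x => enum_rank x].
apply/and4P; split.
- by apply/injectiveP => x y; rewrite !ffunE => /enum_rank_inj.
- by rewrite /= card_ord.
- by rewrite ffunE.
- apply/forallP => t /=; rewrite !inE tmap_comp.
  rewrite tmap_comp (@tmap_ext _ _ _ _ _ sval) // => x; by rewrite ffunE enum_rankK.
Qed.

Lemma rep_of_deg (S : finType) (ar : S -> nat) (d r : nat) (D : database ar) (a : dom D) Hn :
  deg_le D d -> deg_le (pd (pdb_of (@rep_of S ar d r D a Hn))) d.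
Proof.
move=> /forallP HD; apply/forallP => i /=.
pose phi := fun j : 'I_#|dom (pd (nbhd r a))| => sval (enum_val j).
have phi_inj : injective phi.
  by move=> x y /val_inj /enum_val_inj.
apply: leq_trans (HD (phi i)); rewrite /deg.
rewrite -(card_imset _ (tmap_inj phi_inj)).
apply: subset_leq_card; apply/subsetP => t' /imsetP [t].
rewrite !inE /= => /andP [tR it] ->.
apply/andP; split.
  by move: tR; rewrite tmap_comp.
by rewrite /tmap /=; apply: map_f.
Qed.

Lemma type_unique (S : finType) (ar : S -> nat) (d r : nat) (D : database ar) (a : dom D) :
  deg_le D d -> exists X0 : rtype ar d r, forall X : rtype ar d r,
    [exists p in (val X : {set Rep ar d r}), piso (nbhd r a) (@pdb_of _ _ d r p)] = (X == X0).
Proof.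
move=> Hd.
have Hn : #|dom (pd (nbhd r a))| < (Nmax ar d r).+1.
  by rewrite ltnS /= card_sig; apply: ball_card Hd.
pose p := rep_of Hn.
have mem : [set q | piso (pdb_of q) (pdb_of p)] \in rtypes ar d r.
  rewrite inE; apply/asboolP; exists p; split => //.
  split; first exact: rep_of_deg.
  by exists D, a; apply: rep_of_piso.
exists (exist (fun Y => Y \in rtypes ar d r) _ mem) => X.
apply/idP/idP.
- move=> /existsP [p' /andP [p'X iso']].
  have := valP X; rewrite inE => /asboolP [p1 [_ EX]].
  move: p'X; rewrite EX inE => p'p1.
  have pp1 : piso (pdb_of p) (pdb_of p1).
    apply: piso_trans p'p1; apply: piso_trans iso'; apply: piso_sym; exact: rep_of_piso.
  apply/eqP; apply: val_inj => /=; rewrite EX; apply/setP => q; rewrite !inE.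
  apply/idP/idP => H.
    by apply: piso_trans H (piso_sym pp1).
  by apply: piso_trans H pp1.
- move=> /eqP ->; apply/existsP; exists p; rewrite /= inE piso_refl /=.
  exact: rep_of_piso.
Qed.

Lemma card_norm1 (S : finType) (ar : S -> nat) (d r : nat) (D : database ar) :
  deg_le D d -> #|dom D| = norm1 (hvec d r D).
Proof.
move=> Hd; rewrite /norm1.
under eq_bigr => X _ do rewrite ffunE -sum1_card big_mkcond /=.
rewrite exchange_big /= -sum1_card.
apply: eq_bigr => a _.
have [X0 HX0] := type_unique r a Hd.
rewrite (eq_bigr (fun X => (X == X0 : nat))); last first.
  by move=> X _; rewrite inE HX0; case: (X == X0).
by rewrite -big_mkcond /= big_pred1_eq.
Qed.
Open Scope ring_scope.

Lemma dist_real (R : realType) (I : finType) (x z : I -> R) :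
  (forall i, 0 <= x i) -> (forall i, 0 <= z i) -> 0 < \sum_i x i ->
  \sum_i `|x i / (\sum_j x j) - z i / (\sum_j z j)| <=
  2 * (\sum_i `|x i - z i|) / (\sum_j x j).
Proof.
move=> x0 z0; set X := \sum_j x j; set Z := \sum_j z j => X0.
have Z0 : 0 <= Z by apply: sumr_ge0.
have D0 : 0 <= \sum_i `|x i - z i| by apply: sumr_ge0.
have [Zz|Zp] := eqVneq Z 0.
  have zi : forall i, z i = 0.
    by move=> i; apply: (psumr_eq0P _ Zz) => // j _.
  rewrite (eq_bigr (fun i => x i / X)); last first.
    by move=> i _; rewrite zi mul0r subr0 ger0_norm // divr_ge0 // ltW.
  rewrite [X in _ <= 2 * X / _](eq_bigr (fun i => x i)); last first.
    by move=> i _; rewrite zi subr0 ger0_norm.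
  rewrite -mulr_suml -/X ler_pM2r ?invr_gt0 //; lra.
have Zpos : 0 < Z by rewrite lt_def Zp Z0.
have step : forall i, `|x i / X - z i / Z| <= `|x i - z i| / X + z i * (`|Z - X| / (X * Z)).
  move=> i.
  have -> : x i / X - z i / Z = (x i - z i) / X + z i * ((Z - X) / (X * Z)).
    by field; apply/andP; split; rewrite gt_eqF.
  apply: le_trans (@ler_normD _ R _ _) _.
  rewrite normrM normfV (ger0_norm (ltW X0)) normrM (ger0_norm (z0 i)).
  by rewrite normrM normfV (ger0_norm (mulr_ge0 (ltW X0) Z0)).
apply: le_trans (ler_sum _ (fun i _ => step i)) _.
rewrite big_split /= -mulr_suml -mulr_suml -/Z.
have -> : Z * (`|Z - X| / (X * Z)) = `|Z - X| / X.
  by field; apply/andP; split; rewrite gt_eqF.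
have ZX : `|Z - X| <= \sum_i `|x i - z i|.
  rewrite /Z /X -sumrB; apply: le_trans (ler_norm_sum _ _ _) _.
  by apply: ler_sum => i _; rewrite distrC.
rewrite mulr_natl mulr2n mulrDl lerD2l.
by rewrite ler_pM2r ?invr_gt0.
Qed.
Lemma natdist (R : realType) (a b e : nat) :
  (a <= b + e)%N -> (b <= a + e)%N -> `|a%:R - b%:R| <= e%:R :> R.
Proof.
move=> h1 h2; rewrite ler_distl; apply/andP; split.
  by rewrite lerBlDr -natrD ler_nat.
by rewrite -natrD ler_nat.
Qed.
Close Scope ring_scope.
Lemma norm1_comb (S : finType) (ar : S -> nat) (d r K : nat) (u : {ffun rtype ar d r -> nat})
  (b : 'I_K -> nat) (g : 'I_K -> {ffun rtype ar d r -> nat}) :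
  norm1 [ffun X => u X + \sum_(j < K) b j * g j X] = norm1 u + \sum_(j < K) b j * norm1 (g j).
Proof.
rewrite /norm1; under eq_bigr do rewrite ffunE.
rewrite big_split /= exchange_big; congr addn; apply: eq_bigr => j _.
by rewrite big_distrr.
Qed.

Lemma split_sum (K q : nat) (a : 'I_K -> nat) (g : 'I_K -> nat) :
  \sum_(j < K) a j * g j = q * \sum_(j < K) (a j %/ q) * g j + \sum_(j < K) (a j %% q) * g j.
Proof.
rewrite big_distrr -big_split; apply: eq_bigr => j _ /=.
rewrite {1}(divn_eq (a j) q) mulnDl; ring.
Qed.

Unset Implicit Arguments. Set Strict Implicit. Set Printing Implicit Defensive.

Theorem corollary10 (Sg : finType) (ar : Sg -> nat) (Har : forall s, 0 < ar s)
  (d : nat) (Hd : 2 <= d) (R : realType) (eps : R) (Heps0 : (0 < eps)%R)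
  (Heps1 : (eps <= 1)%R) (r : nat)
  (C : database ar -> Prop) (HCdeg : forall D, C D -> deg_le D d)
  (D : database ar) (HD : C D)
  (m : nat) (ks : 'I_m -> nat)
  (v0 : 'I_m -> {ffun rtype ar d r -> nat})
  (gens : forall i : 'I_m, 'I_(ks i) -> {ffun rtype ar d r -> nat})
  (Hsemi : forall w : {ffun rtype ar d r -> nat},
      (exists D', C D' /\ @hvec Sg ar d r D' = w) <->
      (exists (i : 'I_m) (a : 'I_(ks i) -> nat),
          forall X, w X = (v0 i X + \sum_(j < ks i) a j * gens i j X)%N)) :
  let c := ctypes ar d r in
  let k := (\max_(i < m) ks i).+1 in
  let v := \max_(i < m) maxn (norm1 (v0 i))
                              (\max_(j < ks i) norm1 (gens i j)) in
  exists D0 : database ar,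
    (\sum_(X : rtype ar d r) `|@dvec Sg ar R d r D X - @dvec Sg ar R d r D0 X| <= eps)%R /\
    ((#|dom D0|)%:R <= (k * v)%:R * (3%:R * (c * k * v)%:R / eps + 2%:R))%R.
Proof.
move=> c k v.
have Cdeg := HCdeg D HD.
have [i [a Ha]] := (Hsemi (hvec d r D)).1 (ex_intro _ D (conj HD erefl)).
set h := hvec d r D in Ha.
have nD := card_norm1 r Cdeg.
have eps0 : (0 <= eps)%R by apply: ltW.
have [n0|npos] := posnP #|dom D|.
  exists D; split.
    rewrite (eq_bigr (fun _ => 0%R)); first by rewrite big1.
    by move=> X _; rewrite subrr normr0.
  rewrite n0; apply: mulr_ge0 => //; apply: addr_ge0 => //; apply: divr_ge0 => //; exact: mulr_ge0.
set n := #|dom D| in npos nD *.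
set K := ks i.
set U := norm1 (v0 i).
set G := fun j : 'I_K => norm1 (gens i j).
have hE : h = [ffun X => v0 i X + \sum_(j < K) a j * gens i j X].
  by apply/ffunP => X; rewrite ffunE Ha.
have Hn : n = U + \sum_(j < K) a j * G j by rewrite nD -/h hE norm1_comb.
have HK : K < k by rewrite ltnS; exact: (leq_bigmax i).
have HUv : U <= v.
  apply: leq_trans (leq_bigmax i); exact: leq_maxl.
have HGv : forall j, G j <= v.
  move=> j; apply: leq_trans (leq_bigmax i); apply: leq_trans (leq_maxr _ _).
  exact: (leq_bigmax j).
have v1 : 0 < v.
  rewrite lt0n; apply/negP => /eqP v0'.
  move: npos; rewrite Hn.
  have -> : U = 0 by apply/eqP; rewrite -leqn0 -v0' HUv.
  rewrite big1 // => j _.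
  have -> : G j = 0 by apply/eqP; rewrite -leqn0 -v0' HGv.
  by rewrite muln0.
have k1 : 0 < k by [].
have c1 : 0 < c.
  have : (\sum_X h X != 0)%N by rewrite -/(norm1 h) /h -nD -lt0n.
  rewrite sum_nat_eq0 negb_forall => /existsP [X _].
  by apply/card_gt0P; exists X.
pose t : R := (eps * n%:R / (2 * k * v)%:R)%R.
have kv0 : (0 < (2 * k * v)%:R :> R)%R by rewrite ltr0n !muln_gt0 k1 v1.
have t0 : (0 <= t)%R by rewrite /t divr_ge0 // ?mulr_ge0 // ltW.
have /andP [tlo thi] := truncn_itv t0.
set T := Num.Def.trunc t in tlo thi.
set q := T.+1 in thi.
pose b := fun j : 'I_K => a j %/ q.
pose w : {ffun rtype ar d r -> nat} := [ffun X => v0 i X + \sum_(j < K) b j * gens i j X].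
have [D0 [CD0 hD0]] : exists D' : database ar, C D' /\ hvec d r D' = w.
  by apply/(Hsemi w).2; exists i, b => X; rewrite ffunE.
have nD0 := card_norm1 r (HCdeg _ CD0).
have nD0' := nD0.
rewrite hD0 in nD0'.
rewrite hD0 /w norm1_comb -/U in nD0.
set B := \sum_(j < K) b j * norm1 (gens i j) in nD0.
exists D0; split.
  pose x := fun X => ((h X)%:R : R)%R.
  pose z := fun X => ((q * w X)%:R : R)%R.
  have q0R : ((q%:R : R) != 0)%R by rewrite pnatr_eq0.
  have eq1 : forall X, dvec R D X = (x X / \sum_Y x Y)%R.
    by move=> X; rewrite /dvec -/n nD /norm1 natr_sum.
  have eq2 : forall X, dvec R D0 X = (z X / \sum_Y z Y)%R.
    move=> X; rewrite /dvec hD0 nD0' /norm1 /z natr_sum.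
    under [X in _ = (_ / X)%R]eq_bigr do rewrite natrM.
    by rewrite -mulr_sumr natrM invfM mulrACA divff // mul1r.
  rewrite (eq_bigr (fun X => `|x X / \sum_Y x Y - z X / \sum_Y z Y|)%R); last first.
    by move=> X _; rewrite eq1 eq2.
  have sx : (\sum_Y x Y = n%:R)%R by rewrite /x -natr_sum nD.
  apply: le_trans (dist_real _ _ _) _ => //; first by rewrite sx ltr0n.
  have Hsum : (\sum_X `|x X - z X| <= (T * (k * v))%:R)%R.
    pose E := fun X => T * v0 i X + \sum_(j < K) (a j %% q) * gens i j X.
    apply: (@le_trans _ _ (\sum_X (E X)%:R)%R).
      apply: ler_sum => X _; rewrite /x /z.
      have hX := Ha X; rewrite /w ffunE.
      have sp := split_sum q (fun j => a j) (fun j => gens i j X).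
      rewrite /E; apply: natdist; rewrite hX sp /b /= -/K; nia.
    rewrite -natr_sum ler_nat /E big_split /= -big_distrr /= exchange_big /=.
    apply: (@leq_trans (T * v + K * (T * v))).
      apply: leq_add; first by rewrite leq_mul2l HUv orbT.
      apply: (@leq_trans (\sum_(j < K) (T * v))); last by rewrite sum_nat_const card_ord.
      apply: leq_sum => j _.
      rewrite -big_distrr /=; apply: leq_mul; last exact: HGv.
      by rewrite -ltnS ltn_pmod.
    nia.
  rewrite sx ler_pdivrMr ?ltr0n // mulrC.
  apply: le_trans (_ : (2 * (T * (k * v))%:R <= eps * n%:R)%R).
    by rewrite mulrC; apply: ler_wpM2l.
  move: tlo; rewrite /t ler_pdivlMr // => tlo.
  apply: le_trans tlo; rewrite -!natrM ler_nat; nia.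
have q0 : 0 < q by [].
have qB : q * B <= n.
  rewrite Hn big_distrr /=; apply: leq_trans (leq_addl U _).
  apply: leq_sum => j _; rewrite mulnA; apply: leq_mul => //.
  by rewrite /b mulnC leq_trunc_div.
have epsn : (eps * n%:R < q%:R * (2 * k * v)%:R)%R.
  by move: thi; rewrite /t ltr_pdivrMr.
have qBR : (q%:R * B%:R <= n%:R :> R)%R by rewrite -natrM ler_nat.
have epsB : (eps * B%:R < (2 * k * v)%:R)%R.
  have q0R : (0 < q%:R :> R)%R by rewrite ltr0n.
  rewrite -(ltr_pM2l q0R) mulrA (mulrC (q%:R)%R) -mulrA.
  apply: le_lt_trans epsn; exact: ler_wpM2l.
rewrite nD0 natrD mulrDr addrC.
apply: lerD.
  rewrite mulrA ler_pdivlMr // mulrC; apply: (le_trans (ltW epsB)).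
  rewrite -!natrM ler_nat.
  have : 0 < c * k * v by rewrite !muln_gt0 c1 k1 v1.
  nia.
rewrite -natrM ler_nat; nia.
Qed.
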